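(* Let $H$, $L$ be as in the context and let $(S,\mathcal T_0)$ be a feasible solution. Then $\omega(H_{\mathcal T_0})=\max\{\omega_j(H_{\mathcal T_0}): j\in[NZ),\ j\bmod Z<LS\}$.
   Context: Notation: $[n)=\{0,1,\dots,n-1\}$. Let $M,N,Z$ be positive integers and let $H$ be a binary $MZ\times NZ$ matrix made of $M\times N$ blocks, each a $Z\times Z$ circulant (row $i$ of a block is the cyclic right shift by $i$ of its row $0$); assume $H$ has no zero row and no two identical rows. For $\mathcal A\subseteq[MZ)$, $H_{\mathcal A}$ is the submatrix of rows indexed by $\mathcal A$. $\omega_j(A)$ is the Hamming weight of column $j$ of $A$ and $\omega(A)=\max_j\omega_j(A)$. For $i\in[MZ)$ and integer $s$, $\pi^s(i)=Z\lfloor i/Z\rfloor+((i+s)\bmod Z)$ and $\pi^s(\mathcal T)=\{\pi^s(x):x\in\mathcal T\}$. Fix an integer $L>1$. A pair $(S,\mathcal T_0)$ ($S$ a positive integer, $\mathcal T_0\subseteq[MZ)$) is a feasible solution if, with $\mathcal T_l=\pi^{lS}(\mathcal T_0)$ for $l\in[L)$, the sets $\mathcal T_0,\dots,\mathcal T_{L-1}$ are pairwise disjoint with union $[MZ)$. *)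

(* Defs.v *)
From mathcomp Require Import all_boot all_order all_algebra.
Set Implicit Arguments. Unset Strict Implicit. Unset Printing Implicit Defensive.

(* H is a binary (bool) MZ x NZ matrix made of M x N blocks of size Z x Z,
   each block circulant: row r of a block is the cyclic right shift by r of
   its row 0, i.e. entry (r, c) of a block equals entry (0, (c - r) mod Z). *)
Definition circulant_blocks (M N Z : nat) (H : 'M[bool]_(M * Z, N * Z)) :=
  forall (i i' : 'I_(M * Z)) (j j' : 'I_(N * Z)),
    i %/ Z = i' %/ Z -> j %/ Z = j' %/ Z ->
    (j %% Z + Z - i %% Z) %% Z = (j' %% Z + Z - i' %% Z) %% Z ->
    H i j = H i' j'.

Definition no_zero_row (m n : nat) (H : 'M[bool]_(m, n)) :=
  forall i : 'I_m, exists j : 'I_n, H i j.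

Definition distinct_rows (m n : nat) (H : 'M[bool]_(m, n)) :=
  forall i i' : 'I_m, (forall j : 'I_n, H i j = H i' j) -> i = i'.

Definition pi_shift (Z s i : nat) : nat := Z * (i %/ Z) + (i + s) %% Z.

Definition shiftset {M Z : nat} (S l : nat) (T0 : {set 'I_(M * Z)}) : {set 'I_(M * Z)} :=
  [set i : 'I_(M * Z) | [exists t in T0, pi_shift Z (l * S) t == i :> nat]].

Definition feasible {M Z : nat} (L S : nat) (T0 : {set 'I_(M * Z)}) :=
  0 < S /\
  (forall l l', l < L -> l' < L -> l != l' ->
     [disjoint shiftset S l T0 & shiftset S l' T0]) /\
  (forall i : 'I_(M * Z), exists2 l, l < L & i \in shiftset S l T0).

Definition colw (m n : nat) (H : 'M[bool]_(m, n)) (A : {set 'I_m}) (j : 'I_n) : nat :=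
  #|[set i in A | H i j]|.

Definition omega (m n : nat) (H : 'M[bool]_(m, n)) (A : {set 'I_m}) : nat :=
  \max_(j < n) colw H A j.

(* Main.v *)
Require Import Defs.
From mathcomp Require Import all_boot all_order all_algebra.
From mathcomp Require Import zify.

Section Aux.
Variable Z : nat.
Hypothesis Zpos : 0 < Z.

Lemma pi_div s i : pi_shift Z s i %/ Z = i %/ Z.
Proof. by rewrite /pi_shift (mulnC Z) divnMDl // (divn_small (ltn_pmod _ Zpos)) addn0. Qed.

Lemma pi_mod s i : pi_shift Z s i %% Z = (i + s) %% Z.
Proof. by rewrite /pi_shift (mulnC Z) modnMDl modn_mod. Qed.

Lemma pi_add a b i : pi_shift Z a (pi_shift Z b i) = pi_shift Z (b + a) i.
Proof.
rewrite {1}/pi_shift pi_div /pi_shift; congr (_ + _).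
by rewrite -modnDml pi_mod modnDml addnA.
Qed.

Lemma pi_mulZ k i : pi_shift Z (k * Z) i = i.
Proof. by rewrite /pi_shift (addnC i) modnMDl (mulnC Z) -divn_eq. Qed.

Lemma pi_inj a x y : pi_shift Z a x = pi_shift Z a y -> x = y.
Proof.
move=> E.
have := congr1 (pi_shift Z (a * (Z - 1))) E.
rewrite !pi_add -{1 3}(muln1 a) -mulnDr subnKC // !pi_mulZ //.
Qed.

Lemma pi_lt n s i : i < n * Z -> pi_shift Z s i < n * Z.
Proof.
move=> lt; rewrite /pi_shift.
have h1 : i %/ Z < n by rewrite ltn_divLR.
have h2 : (i + s) %% Z < Z by rewrite ltn_pmod.
apply: (@leq_trans (Z * (i %/ Z) + Z)); first by rewrite ltn_add2l.
by rewrite -mulnSr mulnC leq_mul2r h1 orbT.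
Qed.

Lemma diff_mod a b : (a %% Z + Z - b %% Z) + b = a %[mod Z].
Proof.
rewrite -modnDmr subnK; last by apply: leq_trans (ltnW (ltn_pmod b Zpos)) (leq_addl _ _).
by rewrite modnDr modn_mod.
Qed.

Lemma circ_shift s i j :
  ((j + s) %% Z + Z - (i + s) %% Z) %% Z = (j %% Z + Z - i %% Z) %% Z.
Proof.
have h : ((j + s) %% Z + Z - (i + s) %% Z) + (i + s) = (j %% Z + Z - i %% Z) + (i + s) %[mod Z].
  by rewrite (diff_mod (j+s) (i+s)) addnA -(modnDml (j %% Z + Z - i %% Z + i)) (diff_mod j i) modnDml.
by apply/eqP; rewrite -(eqn_modDr (i + s)); apply/eqP.
Qed.

End Aux.

Theorem theorem4 (M N Z L S : nat) (H : 'M[bool]_(M * Z, N * Z))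
  (T0 : {set 'I_(M * Z)}) :
  0 < M -> 0 < N -> 0 < Z -> 1 < L ->
  circulant_blocks H -> no_zero_row H -> distinct_rows H ->
  feasible L S T0 ->
  omega H T0 = \max_(j < N * Z | j %% Z < L * S) colw H T0 j.
Proof.
move=> M0 N0 Z0 L1 circ _ _ [S0 [disj cov]].
set s := L * S.
have s0 : 0 < s by rewrite muln_gt0 S0 (ltn_trans _ L1).
pose shR (a : nat) (i : 'I_(M * Z)) : 'I_(M * Z) := Ordinal (@pi_lt Z Z0 M a i (ltn_ord i)).
pose shC (a : nat) (j : 'I_(N * Z)) : 'I_(N * Z) := Ordinal (@pi_lt Z Z0 N a j (ltn_ord j)).
have memT : forall l (x : 'I_(M * Z)),
    (x \in shiftset S l T0) = [exists t in T0, pi_shift Z (l * S) t == x :> nat].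
  by move=> l x; rewrite inE.
have clos : forall t, t \in T0 -> shR s t \in T0.
  move=> t tT.
  have [l lL xl] := cov (shR s t).
  move: xl; rewrite memT => /existsP [t' /andP [t'T /eqP E]].
  case: l lL E => [|l] lL E.
    have E0 : pi_shift Z (0 * Z) t' = shR s t by exact: E.
    by rewrite pi_mulZ // in E0; have -> : shR s t = t' by apply: val_inj.
  exfalso.
  have E2 : pi_shift Z ((L - 1) * S) t = pi_shift Z (l * S) t'.
    apply: (@pi_inj Z Z0 S).
    rewrite !pi_add // -!mulSnr E subn1 prednK // ltnW //.
  have lL' : l < L - 1 by rewrite ltn_subRL add1n.
  have hd := disj (L - 1) l ltac:(lia) ltac:(lia).
  have x1 : shR ((L - 1) * S) t \in shiftset S (L - 1) T0.
    by rewrite memT; apply/existsP; exists t; rewrite tT /=.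
  have x2 : shR ((L - 1) * S) t \in shiftset S l T0.
    by rewrite memT; apply/existsP; exists t'; rewrite t'T /= E2.
  have ne : L - 1 != l by rewrite neq_ltn lL' orbT.
  by rewrite (disjointFr (hd ne) x1) in x2.
have colstep : forall j, colw H T0 j <= colw H T0 (shC s j).
  move=> j; rewrite /colw.
  have sub : shR s @: [set i in T0 | H i j] \subset [set i in T0 | H i (shC s j)].
    apply/subsetP => y /imsetP [x]; rewrite inE => /andP [xT hx] ->.
    rewrite inE clos //=; rewrite (_ : H _ _ = H x j) //; apply: circ => /=.
    - by rewrite pi_div.
    - by rewrite pi_div.
    - by rewrite !pi_mod // circ_shift.
  apply: leq_trans (subset_leq_card sub).
  rewrite card_in_imset //.
  by move=> x y _ _ /(congr1 val) /= /(@pi_inj Z Z0) /val_inj.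
have key : forall k (j : 'I_(N * Z)), Z - j %% Z <= k ->
    exists2 j' : 'I_(N * Z), j' %% Z < s & colw H T0 j <= colw H T0 j'.
  elim=> [|k IH] j hk.
    by have := ltn_pmod j Z0; move: hk; generalize (j %% Z) => a; lia.
  case: (ltnP (j %% Z) s) => hjs; first by exists j.
  have m1 : shC s j %% Z = (j %% Z + s) %% Z by rewrite /= pi_mod // modnDml.
  case: (ltnP (j %% Z + s) Z) => hz.
    rewrite (modn_small hz) in m1.
    have hk2 : Z - shC s j %% Z <= k by move: hk m1 s0 hz; generalize (j %% Z) (shC s j %% Z) => a b; lia.
    have [j' h1 h2] := IH (shC s j) hk2.
    by exists j' => //; apply: leq_trans (colstep j) h2.
  exists (shC s j); last exact: colstep.
  have jz := ltn_pmod j Z0.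
  rewrite m1 -(subnK hz) modnDr modn_small; lia.
apply/eqP; rewrite eqn_leq; apply/andP; split.
  apply/bigmax_leqP => j _.
  have [j' h1 h2] := key Z j (leq_subr _ _).
  apply: leq_trans h2 _; exact: (@leq_bigmax_cond _ (fun j0 : 'I_(N * Z) => j0 %% Z < s) (fun j0 => colw H T0 j0) j' h1).
apply/bigmax_leqP => j _; rewrite /omega; by apply: (leq_bigmax_cond (P := xpredT)).
Qed.
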